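(* Let $R$ be an associative ring with identity and involution $*$, and let $a\in R^{\#}\cap R^{\dagger}$. Then $a\in R^{SEP}$ if and only if $a^{\dagger}a^2$ is a left $(a^{\dagger})^*$-idempotent, i.e. $(a^{\dagger}a^2)^2=(a^{\dagger})^*a^{\dagger}a^2$.
   Context: An involution on $R$ is a map $x\mapsto x^*$ with $(x^* )^*=x$, $(x+y)^*=x^*+y^*$, $(xy)^*=y^*x^*$. An element $a$ is Moore–Penrose invertible if there is $b$ with $aba=a$, $bab=b$, $(ab)^*=ab$, $(ba)^*=ba$; such $b$ is unique, denoted $a^{\dagger}$, and $R^{\dagger}$ is the set of such $a$. An element $a$ is group invertible if there is $b$ with $aba=a$, $bab=b$, $ab=ba$; such $b$ is unique, denoted $a^{\#}$, and $R^{\#}$ is the set of such $a$. For $a\in R^{\#}\cap R^{\dagger}$, $a$ is SEP if $a^*=a^{\dagger}=a^{\#}$; $R^{SEP}$ denotes the set of SEP elements. For $e,c\in R$, $e$ is a left $c$-idempotent if $e^2=ce$. *)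

(* Defs.v *)
From mathcomp Require Import all_boot all_algebra.
Set Implicit Arguments. Unset Strict Implicit. Unset Printing Implicit Defensive.
Import GRing.Theory.
Local Open Scope ring_scope.

(* An involution on a ring R (possibly trivial ring, hence pzRingType). *)
Definition involution (R : pzRingType) (s : R -> R) : Prop :=
  [/\ forall x, s (s x) = x,
      forall x y, s (x + y) = s x + s y &
      forall x y, s (x * y) = s y * s x].

Definition is_MP (R : pzRingType) (s : R -> R) (a b : R) : Prop :=
  [/\ a * b * a = a, b * a * b = b, s (a * b) = a * b & s (b * a) = b * a].

Definition is_group_inv (R : pzRingType) (a b : R) : Prop :=
  [/\ a * b * a = a, b * a * b = b & a * b = b * a].

Definition MP_invertible (R : pzRingType) (s : R -> R) (a : R) : Prop :=
  exists b, is_MP s a b.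

Definition group_invertible (R : pzRingType) (a : R) : Prop :=
  exists b, is_group_inv a b.

(* a is SEP: a in R^# ∩ R^† and a^* = a^† = a^#  (inverses are unique) *)
Definition SEP (R : pzRingType) (s : R -> R) (a : R) : Prop :=
  exists b c, [/\ is_MP s a b, is_group_inv a c, s a = b & b = c].

Definition left_c_idempotent (R : pzRingType) (c e : R) : Prop :=
  e * e = c * e.

(* Main.v *)
Require Import Defs.
From mathcomp Require Import all_boot all_algebra.
Local Open Scope ring_scope.
Import GRing.Theory.

Lemma MP_uniq (R : pzRingType) (s : R -> R) (a b b' : R) :
  involution s -> is_MP s a b -> is_MP s a b' -> b = b'.
Proof.
case=> sK sD sM [h1 h2 h3 h4] [k1 k2 k3 k4].
have e1 : b = b * s b * s a by rewrite -mulrA -sM h3 mulrA h2.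
have e2 : s a = s a * a * b' by rewrite -mulrA -k3 -sM k1.
have e4 : s a = b * a * s a by rewrite -h4 -sM mulrA h1.
have e5 : b' = s a * s b' * b' by rewrite -sM k4 k2.
have e3 : b = b * a * b'.
  rewrite {1}e1 {1}e2 !mulrA -(mulrA b (s b)) -sM h3.
  by rewrite mulrA h2.
have e6 : b' = b * a * b'.
  rewrite {1}e5 {1}e4 -(mulrA _ (s a)) -sM k4.
  by rewrite -mulrA k2.
by rewrite {1}e3 -e6.
Qed.

Theorem theorem3p6 (R : pzRingType) (s : R -> R) (a b : R) :
  involution s ->
  group_invertible a ->
  is_MP s a b ->
  (SEP s a <-> left_c_idempotent (s b) (b * a ^+ 2)).
Proof.
move=> inv [c [g1 g2 g3]] hMP.
have inv' := inv; case: inv' => sK sD sM.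
have hMP' := hMP; case: hMP' => h1 h2 h3 h4.
split.
  case=> b' [c' [m' [q1 q2 q3] sa bc]].
  have eb : b = b' := @MP_uniq _ _ _ _ _ inv hMP m'.
  have ea : b * a ^+ 2 = a by rewrite eb bc expr2 mulrA -q3 q1.
  by rewrite /left_c_idempotent ea eb -sa sK.
rewrite /left_c_idempotent expr2 => H.
rewrite !mulrA in H.
have h1X X : X * a * b * a = X * a by rewrite -!mulrA (mulrA a) h1.
have H1 : b * a * a * a = s b * b * a * a by rewrite -H h1X.
have sb1 : s b = s b * b * a by rewrite -{1}h2 sM h4 mulrA.
have sb2 : s b = a * b * s b by rewrite -{1}h2 -mulrA sM h3.
have K : b * a * a * a = s b * a by rewrite H1 -sb1.
have aac : a * a * c = a by rewrite -mulrA g3 mulrA g1.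
have acc : a * c * c = c by rewrite g3 g2.
have aacX X : X * a * a * c = X * a by rewrite -!mulrA (mulrA a) aac.
have accX X : X * a * c * c = X * c by rewrite -!mulrA (mulrA a) acc.
have S4 : b * a = s b * c.
  have -> : b * a = b * a * a * a * c * c by rewrite !aacX.
  by rewrite K accX.
have S5 : b * a = a * b * b * a.
  by rewrite S4 {1}sb2 -mulrA -S4 !mulrA.
have S6 : a = a * a * b * b * a.
  transitivity (a * (b * a)); first by rewrite mulrA h1.
  by rewrite S5 !mulrA.
have caa : c * a * a = a by rewrite -g3 g1.
have S7 : a * c = b * a.
  rewrite g3; transitivity (c * (a * a * b * b * a)); first by rewrite -S6.
  by rewrite !mulrA caa -S5.
have T : a * b = b * a * (a * b) by rewrite -S7 !mulrA g1.
have S8 : a * b = b * a by rewrite -h3 T sM h3 h4 mulrA -S5.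
have abac : a * b = a * c by rewrite S8 S7.
have S9 : b = c.
  by rewrite -{1}h2 -mulrA abac mulrA -S7 acc.
have sbb : a * b = s b * b by rewrite S8 S4 S9.
have ea : a = s b by rewrite -{1}h1 sbb -sb1.
exists b, c; split => //.
by rewrite ea sK.
Qed.
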